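(* The commutative monoid $M$ defined below is residually finite, all its $\mathcal{J}$-classes have finitely many $\mathcal{R}$- and $\mathcal{L}$-classes, but its action on its $\mathcal{R}$-classes (equivalently, since $M$ is commutative, on its $\mathcal{L}$-classes) is not residually finite.
   Context: Let $\tau:\mathbb{Z}\setminus\{0\}\to\mathbb{Z}$, $\tau(2^k(2r+1))=\frac{2}{3}(2^{2\lceil k/2\rceil}-1)$ ($k,r\in\mathbb{Z}$, $k\ge0$). Let $M$ be the commutative monoid with zero $0$ given by generators $a,a^{-1},b_i,c_i$ ($i\in\mathbb{Z}$), $d,e$ and relations $aa^{-1}=a^{-1}a=1$; $b_ic_j=d$ if $i=j$ and $b_ic_j=a^{\tau(j-i)}e$ if $i\neq j$; and $b_ib_j=b_id=b_ie=c_jc_k=c_jd=c_je=dd=de=ee=0$ for all $i,j,k\in\mathbb{Z}$. A monoid is residually finite if distinct elements are separated by homomorphisms to finite monoids. Green's relations: $x\mathcal{R}y$ iff $xM=yM$, $x\mathcal{L}y$ iff $Mx=My$, $x\mathcal{J}y$ iff $MxM=MyM$. The action of $M$ on $M/\mathcal{R}$ ($m\cdot R_x=R_{mx}$) is residually finite if any two distinct classes are separated by an action homomorphism to an action on a finite set, equivalently for all $(s,t)\notin\mathcal{R}$ there is a finite-index (left) congruence containing $\mathcal{R}$ but not $(s,t)$. *)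

(* Defs.v *)
From Stdlib Require Import ZArith.
From mathcomp Require Import all_boot.
Set Implicit Arguments. Unset Strict Implicit. Unset Printing Implicit Defensive.

Definition v2 (z : Z) : nat := logn 2 (Z.abs_nat z).

(* tau(2^k(2r+1)) = 2/3 (2^(2 ceil(k/2)) - 1);  ceil(k/2) = (k+1)/2. *)
Definition tau (z : Z) : Z :=
  ((2 * (2 ^ (2 * Z.of_nat ((v2 z + 1) %/ 2)) - 1)) / 3)%Z.

Inductive gen : Type :=
| Ga | Gai
| Gb of Z | Gc of Z
| Gd | Ge.

Inductive mterm : Type :=
| T1 : mterm
| T0 : mterm
| Tg : gen -> mterm
| Tm : mterm -> mterm -> mterm.

Definition apow (z : Z) : mterm :=
  if (0 <=? z)%Z then iter (Z.to_nat z) (Tm (Tg Ga)) T1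
  else iter (Z.to_nat (- z)) (Tm (Tg Gai)) T1.

Inductive Mrel : mterm -> mterm -> Prop :=
| rel_aai : Mrel (Tm (Tg Ga) (Tg Gai)) T1
| rel_aia : Mrel (Tm (Tg Gai) (Tg Ga)) T1
| rel_bc_eq i : Mrel (Tm (Tg (Gb i)) (Tg (Gc i))) (Tg Gd)
| rel_bc_neq i j : i <> j ->
    Mrel (Tm (Tg (Gb i)) (Tg (Gc j))) (Tm (apow (tau (j - i))) (Tg Ge))
| rel_bb i j : Mrel (Tm (Tg (Gb i)) (Tg (Gb j))) T0
| rel_bd i : Mrel (Tm (Tg (Gb i)) (Tg Gd)) T0
| rel_be i : Mrel (Tm (Tg (Gb i)) (Tg Ge)) T0
| rel_cc j k : Mrel (Tm (Tg (Gc j)) (Tg (Gc k))) T0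
| rel_cd j : Mrel (Tm (Tg (Gc j)) (Tg Gd)) T0
| rel_ce j : Mrel (Tm (Tg (Gc j)) (Tg Ge)) T0
| rel_dd : Mrel (Tm (Tg Gd) (Tg Gd)) T0
| rel_de : Mrel (Tm (Tg Gd) (Tg Ge)) T0
| rel_ee : Mrel (Tm (Tg Ge) (Tg Ge)) T0.

(* The congruence of the presentation: the least congruence on terms making
   Tm associative and commutative with identity T1 and zero T0, and
   containing Mrel.  M is the quotient  mterm / meq. *)
Inductive meq : mterm -> mterm -> Prop :=
| meq_refl t : meq t t
| meq_sym s t : meq s t -> meq t s
| meq_trans s t u : meq s t -> meq t u -> meq s u
| meq_mul s s' t t' : meq s s' -> meq t t' -> meq (Tm s t) (Tm s' t')
| meq_assoc s t u : meq (Tm (Tm s t) u) (Tm s (Tm t u))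
| meq_comm s t : meq (Tm s t) (Tm t s)
| meq_id_l t : meq (Tm T1 t) t
| meq_id_r t : meq (Tm t T1) t
| meq_zero_l t : meq (Tm T0 t) T0
| meq_zero_r t : meq (Tm t T0) T0
| meq_rel s t : Mrel s t -> meq s t.

Definition is_hom (N : Type) (op : N -> N -> N) (e : N) (f : mterm -> N) :=
  [/\ forall s t, meq s t -> f s = f t,
      f T1 = e &
      forall s t, f (Tm s t) = op (f s) (f t)].

Definition is_monoid (N : Type) (op : N -> N -> N) (e : N) :=
  [/\ associative op, left_id e op & right_id e op].

Definition M_residually_finite : Prop :=
  forall s t : mterm, ~ meq s t ->
    exists (N : finType) (op : N -> N -> N) (e : N) (f : mterm -> N),
      [/\ is_monoid op e, is_hom op e f & f s <> f t].

(* Green's relations, literally xM = yM, Mx = My, MxM = MyM *)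
Definition GreenR (x y : mterm) : Prop :=
  forall z, (exists u, meq z (Tm x u)) <-> (exists u, meq z (Tm y u)).
Definition GreenL (x y : mterm) : Prop :=
  forall z, (exists u, meq z (Tm u x)) <-> (exists u, meq z (Tm u y)).
Definition GreenJ (x y : mterm) : Prop :=
  forall z, (exists u v, meq z (Tm (Tm u x) v)) <->
            (exists u v, meq z (Tm (Tm u y) v)).

Definition finitely_many_classes_in_J (Rel : mterm -> mterm -> Prop) (x : mterm) :=
  exists ys : seq mterm, forall z, GreenJ z x -> exists2 y, List.In y ys & Rel z y.

(* M acts on M/R by m . R_x = R_{mx}.  An action of M on a finite set X,
   and an equivariant map M/R -> X (represented on representatives). *)
Definition is_action (X : Type) (act : mterm -> X -> X) :=
  [/\ forall m n, meq m n -> forall x, act m x = act n x,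
      forall x, act T1 x = x &
      forall m n x, act (Tm m n) x = act m (act n x)].

Definition is_Rclass_action_hom (X : Type) (act : mterm -> X -> X)
    (phi : mterm -> X) :=
  (forall s t, GreenR s t -> phi s = phi t) /\
  (forall m s, phi (Tm m s) = act m (phi s)).

Definition Raction_residually_finite : Prop :=
  forall s t : mterm, ~ GreenR s t ->
    exists (X : finType) (act : mterm -> X -> X) (phi : mterm -> X),
      [/\ is_action act, is_Rclass_action_hom act phi & phi s <> phi t].

(* Main.v *)
Require Import Defs.
From Stdlib Require Import ZArith Lia Classical.
From mathcomp Require Import all_boot.

Inductive Mc : Type := MU of Z | MB of Z & Z | MC of Z & Z | MD of Z | ME of Z | MZ.

Arguments tau : simpl never.
Definition bc (s i j : Z) : Mc :=
  if Z.eqb i j then MD s else ME (s + tau (j - i))%Z.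

Definition mul (x y : Mc) : Mc :=
  match x, y with
  | MZ, _ => MZ | _, MZ => MZ
  | MU k, MU l => MU (k + l)%Z
  | MU k, MB l i => MB (k + l)%Z i
  | MU k, MC l j => MC (k + l)%Z j
  | MU k, MD l => MD (k + l)%Z
  | MU k, ME l => ME (k + l)%Z
  | MB k i, MU l => MB (k + l)%Z i
  | MC k j, MU l => MC (k + l)%Z j
  | MD k, MU l => MD (k + l)%Z
  | ME k, MU l => ME (k + l)%Z
  | MB k i, MC l j => bc (k + l)%Z i j
  | MC l j, MB k i => bc (k + l)%Z i j
  | _, _ => MZ
  end.

Lemma mul_comm x y : mul x y = mul y x.
Proof.
case: x => [k|k i|k i|k|k|]; case: y => [l|l j|l j|l|l|]; cbn [mul]; try reflexivity; f_equal; ring.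
Qed.

Arguments bc : simpl never.
Lemma mul_assoc x y z : mul (mul x y) z = mul x (mul y z).
Proof.
case: x => [k|k i|k i|k|k|]; case: y => [l|l j|l j|l|l|]; case: z => [m|m h|m h|m|m|];
  cbn [mul]; try reflexivity; rewrite /bc;
  repeat match goal with |- context[Z.eqb ?a ?b] => destruct (Z.eqb a b) end;
  cbn [mul]; try reflexivity; f_equal; ring.
Qed.

Lemma mul1 x : mul (MU 0) x = x.
Proof. by case: x. Qed.
Lemma mulZ x : mul MZ x = MZ.
Proof. by case: x. Qed.
From Stdlib Require Import Setoid Morphisms.

Definition nfg (g : gen) : Mc :=
  match g with Ga => MU 1 | Gai => MU (-1) | Gb i => MB 0 i | Gc i => MC 0 i
  | Gd => MD 0 | Ge => ME 0 end.
Fixpoint nf (t : mterm) : Mc :=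
  match t with T1 => MU 0 | T0 => MZ | Tg g => nfg g | Tm s u => mul (nf s) (nf u) end.

Definition Pn n := iter n (Tm (Tg Ga)) T1.
Definition Qn n := iter n (Tm (Tg Gai)) T1.

Lemma nf_Pn n : nf (Pn n) = MU (Z.of_nat n).
Proof. elim: n => [//|n IH]. change (nf (Pn n.+1)) with (mul (MU 1) (nf (Pn n))). rewrite IH; cbn [mul]. f_equal; lia. Qed.
Lemma nf_Qn n : nf (Qn n) = MU (- Z.of_nat n).
Proof. elim: n => [//|n IH]. change (nf (Qn n.+1)) with (mul (MU (-1)) (nf (Qn n))). rewrite IH; cbn [mul]. f_equal; lia. Qed.

Lemma apow_pos k : apow (Z.of_nat k) = Pn k.
Proof. rewrite /apow. have -> : (0 <=? Z.of_nat k)%Z = true by apply Z.leb_le; lia.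
by rewrite Nat2Z.id. Qed.
Lemma apow_neg k : apow (- Z.of_nat k) = Qn k.
Proof. case: k => [//|k]. rewrite /apow.
have -> : (0 <=? - Z.of_nat k.+1)%Z = false by apply Z.leb_gt; lia.
by rewrite Z.opp_involutive Nat2Z.id. Qed.

Lemma nf_apow z : nf (apow z) = MU z.
Proof.
case: (Z_le_gt_dec 0 z) => h.
- have -> : z = Z.of_nat (Z.to_nat z) by rewrite Z2Nat.id.
  by rewrite apow_pos nf_Pn.
- have -> : z = (- Z.of_nat (Z.to_nat (- z)))%Z by rewrite Z2Nat.id; lia.
  by rewrite apow_neg nf_Qn.
Qed.

Lemma nf_meq s t : meq s t -> nf s = nf t.
Proof.
elim.
- by [].
- by move=> ? ? _ ->.
- by move=> ? ? ? _ -> _ ->.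
- by move=> ? ? ? ? _ /= -> _ ->.
- by move=> * /=; rewrite mul_assoc.
- by move=> * /=; rewrite mul_comm.
- by move=> u; exact: (mul1 (nf u)).
- by move=> u; rewrite -[RHS]mul1; exact: mul_comm.
- by move=> u; exact: (mulZ (nf u)).
- by move=> u; change (mul (nf u) MZ = MZ); rewrite mul_comm; exact: mulZ.
- move=> ? ? [] //=.
  + by move=> i; rewrite /bc Z.eqb_refl.
  + move=> i j hij; rewrite nf_apow /= /bc.
    have -> : (i =? j)%Z = false by apply Z.eqb_neq.
    f_equal; ring.
Qed.

Add Relation mterm meq reflexivity proved by meq_refl symmetry proved by meq_sym
  transitivity proved by meq_trans as meq_setoid.
Add Morphism Tm with signature meq ==> meq ==> meq as Tm_morph.
Proof. by move=> *; apply: meq_mul. Qed.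

Lemma meqA s t u : meq (Tm (Tm s t) u) (Tm s (Tm t u)). Proof. exact: meq_assoc. Qed.
Lemma meqC s t : meq (Tm s t) (Tm t s). Proof. exact: meq_comm. Qed.

Lemma interchange x y z w : meq (Tm (Tm x y) (Tm z w)) (Tm (Tm x z) (Tm y w)).
Proof.
rewrite meqA -(meqA y z w) (meqC y z) (meqA z y w) -meqA. reflexivity.
Qed.

Lemma meq1l t : meq (Tm T1 t) t. Proof. exact: meq_id_l. Qed.
Lemma meq1r t : meq (Tm t T1) t. Proof. exact: meq_id_r. Qed.

Lemma Pn_add n m : meq (Pn (n + m)) (Tm (Pn n) (Pn m)).
Proof.
elim: n => [|n IH]; first by rewrite add0n; symmetry; exact: meq1l.
change (meq (Tm (Tg Ga) (Pn (n + m))) (Tm (Tm (Tg Ga) (Pn n)) (Pn m))).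
(rewrite IH meqA; try reflexivity).
Qed.
Lemma Qn_add n m : meq (Qn (n + m)) (Tm (Qn n) (Qn m)).
Proof.
elim: n => [|n IH]; first by rewrite add0n; symmetry; exact: meq1l.
change (meq (Tm (Tg Gai) (Qn (n + m))) (Tm (Tm (Tg Gai) (Qn n)) (Qn m))).
(rewrite IH meqA; try reflexivity).
Qed.
Lemma PQ n : meq (Tm (Pn n) (Qn n)) T1.
Proof.
elim: n => [|n IH]; first exact: meq1l.
change (meq (Tm (Tm (Tg Ga) (Pn n)) (Tm (Tg Gai) (Qn n))) T1).
rewrite interchange IH (meq_rel rel_aai). exact: meq1l.
Qed.

Lemma PQ_apow n m : meq (Tm (Pn n) (Qn m)) (apow (Z.of_nat n - Z.of_nat m)).
Proof.
case: (leqP m n) => h.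
- have e : n = (n - m) + m by rewrite subnK.
  rewrite {1}e Pn_add meqA PQ meq1r; try reflexivity.
  have -> : (Z.of_nat n - Z.of_nat m)%Z = Z.of_nat (n - m).
    move: e; set d := n - m => e; rewrite e Nat2Z.inj_add; lia.
  rewrite apow_pos; reflexivity.
- have e : m = (m - n) + n by rewrite subnK // ltnW.
  rewrite {1}e Qn_add (meqC (Qn _)) -meqA PQ meq1l; try reflexivity.
  have -> : (Z.of_nat n - Z.of_nat m)%Z = (- Z.of_nat (m - n))%Z.
    move: e; set d := m - n => e; rewrite e Nat2Z.inj_add; lia.
  rewrite apow_neg; reflexivity.
Qed.

Lemma apow_PQ z : meq (apow z) (Tm (Pn (Z.to_nat z)) (Qn (Z.to_nat (- z)))).
Proof. rewrite PQ_apow. have -> : (Z.of_nat (Z.to_nat z) - Z.of_nat (Z.to_nat (- z)))%Z = z by lia.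
reflexivity. Qed.

Lemma apow_add k l : meq (Tm (apow k) (apow l)) (apow (k + l)).
Proof.
rewrite (apow_PQ k) (apow_PQ l) interchange -!Pn_add -!Qn_add PQ_apow.
have -> : (Z.of_nat (Z.to_nat k + Z.to_nat l) - Z.of_nat (Z.to_nat (- k) + Z.to_nat (- l)))%Z = (k + l)%Z.
  rewrite !Nat2Z.inj_add; lia.
reflexivity.
Qed.

Definition reify (x : Mc) : mterm :=
  match x with
  | MU k => apow k
  | MB k i => Tm (apow k) (Tg (Gb i))
  | MC k j => Tm (apow k) (Tg (Gc j))
  | MD k => Tm (apow k) (Tg Gd)
  | ME k => Tm (apow k) (Tg Ge)
  | MZ => T0
  end.

Lemma meq0l t : meq (Tm T0 t) T0. Proof. exact: meq_zero_l. Qed.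
Lemma meq0r t : meq (Tm t T0) T0. Proof. exact: meq_zero_r. Qed.

Lemma GG k l g h : meq (Tm (Tm (apow k) g) (Tm (apow l) h)) (Tm (apow (k + l)) (Tm g h)).
Proof. (rewrite interchange apow_add; try reflexivity). Qed.
Lemma UG k l h : meq (Tm (apow k) (Tm (apow l) h)) (Tm (apow (k + l)) h).
Proof. (rewrite -meqA apow_add; try reflexivity). Qed.
Lemma GU k l g : meq (Tm (Tm (apow k) g) (apow l)) (Tm (apow (k + l)) g).
Proof. (rewrite meqA (meqC g) -meqA apow_add; try reflexivity). Qed.

Lemma reify_bc s i j : meq (Tm (apow s) (Tm (Tg (Gb i)) (Tg (Gc j)))) (reify (bc s i j)).
Proof.
rewrite /bc. case: (Z.eqb_spec i j) => [<-|hij] /=.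
- (rewrite (meq_rel (rel_bc_eq i)); try reflexivity).
- (rewrite (meq_rel (rel_bc_neq hij)) UG; try reflexivity).
Qed.

Lemma reify_mul x y : meq (Tm (reify x) (reify y)) (reify (mul x y)).
Proof.
case: x => [k|k i|k i|k|k|]; case: y => [l|l j|l j|l|l|]; cbn [reify mul];
  try exact: meq0l; try exact: meq0r; try exact: apow_add; try exact: UG; try exact: GU.
all: try (rewrite GG; first [ rewrite (meq_rel (rel_bb _ _)) | rewrite (meq_rel (rel_bd _))
  | rewrite (meq_rel (rel_be _)) | rewrite (meq_rel (rel_cc _ _)) | rewrite (meq_rel (rel_cd _))
  | rewrite (meq_rel (rel_ce _)) | rewrite (meq_rel rel_dd) | rewrite (meq_rel rel_de)
  | rewrite (meq_rel rel_ee) | rewrite (meqC (Tg Gd)) (meq_rel (rel_bd _))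
  | rewrite (meqC (Tg Ge)) (meq_rel (rel_be _)) | rewrite (meqC (Tg Gd)) (meq_rel (rel_cd _))
  | rewrite (meqC (Tg Ge)) (meq_rel (rel_ce _)) | rewrite (meqC (Tg Ge)) (meq_rel rel_de) ];
  exact: meq0r).
- (rewrite GG reify_bc; try reflexivity).
- rewrite GG (meqC (Tg (Gc _))) Z.add_comm reify_bc; try reflexivity.
Qed.

Lemma reify_nf t : meq t (reify (nf t)).
Proof.
elim: t => [|||s IHs t IHt].
- reflexivity.
- reflexivity.
- case.
  + exact (meq_sym (meq_id_r _)).
  + exact (meq_sym (meq_id_r _)).
  + move=> i; exact (meq_sym (meq_id_l _)).
  + move=> i; exact (meq_sym (meq_id_l _)).
  + exact (meq_sym (meq_id_l _)).
  + exact (meq_sym (meq_id_l _)).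
- change (reify (nf (Tm s t))) with (reify (mul (nf s) (nf t))).
  rewrite -reify_mul -IHs -IHt; reflexivity.
Qed.

Lemma meq_nf s t : nf s = nf t -> meq s t.
Proof. move=> e. (rewrite (reify_nf s) (reify_nf t) e; try reflexivity). Qed.

Lemma nf_Tm s t : nf (Tm s t) = mul (nf s) (nf t). Proof. by []. Qed.
Lemma nf_T1 : nf T1 = MU 0. Proof. by []. Qed.

Lemma exR_J w y : (exists u, meq w (Tm y u)) <-> (exists u v, meq w (Tm (Tm u y) v)).
Proof.
split=> [[u h]|[u [v h]]].
- exists T1, u. apply: (meq_trans h). apply: meq_nf; by rewrite !nf_Tm nf_T1 mul1.
- exists (Tm u v). apply: (meq_trans h). apply: meq_nf; rewrite !nf_Tm.
  by rewrite (mul_comm (nf u)) mul_assoc.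
Qed.
Lemma exL_J w y : (exists u, meq w (Tm u y)) <-> (exists u v, meq w (Tm (Tm u y) v)).
Proof.
split=> [[u h]|[u [v h]]].
- exists u, T1. apply: (meq_trans h). apply: meq_nf; by rewrite !nf_Tm nf_T1 [mul _ (MU 0)]mul_comm mul1.
- exists (Tm u v). apply: (meq_trans h). apply: meq_nf; rewrite !nf_Tm.
  by rewrite mul_assoc (mul_comm (nf y)) -mul_assoc.
Qed.

Lemma part2 x : finitely_many_classes_in_J GreenR x /\ finitely_many_classes_in_J GreenL x.
Proof.
split; exists [:: x] => z hz; exists x; (try by left); move=> w.
- by rewrite !exR_J.
- by rewrite !exL_J.
Qed.

Lemma meq_GreenR s t : meq s t -> GreenR s t.
Proof.
move=> h z; split=> [[u hu]|[u hu]]; exists u; apply: (meq_trans hu).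
- apply: meq_mul; [exact: h | exact: meq_refl].
- apply: meq_mul; [exact: meq_sym | exact: meq_refl].
Qed.

Lemma GreenR_ae z : GreenR (Tm (apow z) (Tg Ge)) (Tg Ge).
Proof.
move=> w; split=> [[u hu]|[u hu]].
- exists (Tm (apow z) u). apply: (meq_trans hu). apply: meq_nf; rewrite !nf_Tm !nf_apow.
  by case: (nf u) => * /=; try (f_equal; ring).
- exists (Tm (apow (- z)) u). apply: (meq_trans hu). apply: meq_nf; rewrite !nf_Tm !nf_apow.
  by case: (nf u) => * /=; try (f_equal; ring).
Qed.

Lemma not_GreenR_de : ~ GreenR (Tg Gd) (Tg Ge).
Proof.
move=> h. have [_ [u /nf_meq /= hu]] : (exists u, meq (Tg Gd) (Tm (Tg Gd) u)) /\
   exists u, meq (Tg Gd) (Tm (Tg Ge) u).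
  split; last (apply/(h (Tg Gd))); exists T1; exact (meq_sym (meq_id_r _)).
by case: (nf u) hu.
Qed.

Lemma part3 : ~ Raction_residually_finite.
Proof.
move=> H. have [X [act [phi [_ [Hphi1 Hphi2] Hne]]]] := H _ _ not_GreenR_de.
pose g (i : 'I_(#|X|.+1)) := phi (Tg (Gc (Z.of_nat i))).
have ninj : ~ injective g.
  move=> /leq_card. by rewrite card_ord ltnn.
have [i [j [hij hg]]] : exists i j, i <> j /\ g i = g j.
  apply: NNPP => hn; apply: ninj => i j hg; apply: NNPP => hne; apply: hn.
  by exists i, j.
have hIJ : Z.of_nat i <> Z.of_nat j.
  move=> e; apply: hij; apply: val_inj; exact: Nat2Z.inj.
apply: Hne.
have e1 : phi (Tg Gd) = phi (Tm (Tg (Gb (Z.of_nat i))) (Tg (Gc (Z.of_nat i)))).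
  apply: Hphi1; apply: meq_GreenR; apply: meq_sym; apply: meq_rel; exact: rel_bc_eq.
rewrite e1 Hphi2 -/(g i) hg /g -Hphi2.
rewrite (Hphi1 _ _ (meq_GreenR _ _ (meq_rel (rel_bc_neq hIJ)))).
exact: Hphi1 (GreenR_ae _).
Qed.

Definition tl (L : nat) : Z := ((2 * (2 ^ (2 * Z.of_nat L) - 1)) / 3)%Z.
Lemma tau_tl z : tau z = tl ((v2 z + 1) %/ 2). Proof. by []. Qed.
Arguments tl : simpl never.

Definition PP (L : nat) : Z := (2 ^ (2 * Z.of_nat L))%Z.

Lemma PP_S L : PP L.+1 = (4 * PP L)%Z.
Proof.
rewrite /PP Nat2Z.inj_succ Z.mul_succ_r Z.pow_add_r; [|lia|lia].
rewrite Z.mul_comm; reflexivity.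
Qed.
Lemma PP_pos L : (0 < PP L)%Z.
Proof. rewrite /PP; apply: Z.pow_pos_nonneg; lia. Qed.

Arguments PP : simpl never.
Fixpoint tr (L : nat) : Z := match L with 0 => 0%Z | L'.+1 => (4 * tr L' + 2)%Z end.

Lemma tr_eq L : (2 * (PP L - 1) = tr L * 3)%Z.
Proof. elim: L => [|L IH]; first by rewrite /PP. rewrite PP_S; change (tr L.+1) with (4 * tr L + 2)%Z. lia. Qed.

Lemma tl_tr L : tl L = tr L.
Proof. rewrite /tl -/(PP L) tr_eq Z.div_mul //. Qed.

Lemma tr_add L n : tr (L + n) = (PP L * tr n + tr L)%Z.
Proof.
elim: L => [|L IH]; first by rewrite add0n; change (PP 0) with 1%Z; change (tr 0) with 0%Z; lia.
rewrite addSn; change (tr (L + n).+1) with (4 * tr (L + n) + 2)%Z; change (tr L.+1) with (4 * tr L + 2)%Z; rewrite IH PP_S. lia.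
Qed.

Lemma tl_mod L L' : L <= L' -> (tl L' mod PP L = tl L mod PP L)%Z.
Proof.
move=> h; rewrite !tl_tr -(subnKC h) tr_add.
rewrite Z.add_comm Z.mul_comm Z_mod_plus_full. reflexivity.
Qed.

Lemma Zexpn k : Z.of_nat (2 ^ k) = (2 ^ Z.of_nat k)%Z.
Proof.
elim: k => [//|k IH]. rewrite expnS -multE Nat2Z.inj_mul IH (Nat2Z.inj_succ k) Z.pow_succ_r; lia.
Qed.

Lemma dvdZ (d : nat) (z : Z) : (Z.of_nat d | z)%Z <-> d %| Z.abs_nat z.
Proof.
rewrite -Z.divide_abs_r -Nat2Z.inj_abs_nat. move: (Z.abs_nat z) => m.
split.
- move=> [c hc]. apply/dvdnP.
  case: d hc => [|d] hc.
  + exists 0; rewrite muln0; lia.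
  + have hc0 : (0 <= c)%Z by nia.
    exists (Z.to_nat c). apply: Nat2Z.inj. rewrite -multE Nat2Z.inj_mul Z2Nat.id //.
- move=> /dvdnP [k ->]. exists (Z.of_nat k). by rewrite -multE Nat2Z.inj_mul.
Qed.

Lemma dvd_v2 (k : nat) z : z <> 0%Z -> ((2 ^ Z.of_nat k | z)%Z <-> k <= v2 z).
Proof.
move=> hz. rewrite -Zexpn dvdZ /v2 pfactor_dvdn //.
apply/ltP. lia.
Qed.

Lemma pow2_dvd a b : a <= b -> (2 ^ Z.of_nat a | 2 ^ Z.of_nat b)%Z.
Proof.
move=> h; have [d ->] : exists d, b = d + a by exists (b - a); rewrite subnK.
exists (2 ^ Z.of_nat d)%Z. rewrite -Z.pow_add_r; [|lia|lia].
rewrite Nat2Z.inj_add. reflexivity.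
Qed.

Lemma v2_big L z : z <> 0%Z -> (z mod PP L = 0)%Z -> 2 * L <= v2 z.
Proof.
move=> hz hm. apply/(dvd_v2 _ _ hz). rewrite -multE Nat2Z.inj_mul.
apply/Z.mod_divide => //. have := PP_pos L; lia.
Qed.

Lemma v2_mod L z : (z mod PP L <> 0)%Z -> v2 z = v2 (z mod PP L).
Proof.
move=> hr. set r := (z mod PP L)%Z in hr *.
have hP := PP_pos L.
have hz : z <> 0%Z by move=> e; apply: hr; rewrite /r e Zmod_0_l.
have ez : z = (PP L * (z / PP L) + r)%Z by apply: Z_div_mod_eq_full.
set v := v2 r.
have hv : v < 2 * L.
  rewrite ltnNge; apply/negP => h. apply: (hr).
  have : (2 ^ Z.of_nat (2 * L) | r)%Z by apply/(dvd_v2 _ _ hr).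
  rewrite -multE Nat2Z.inj_mul -/(PP L) => hd.
  have : (r mod PP L = 0)%Z by apply/Z.mod_divide => //; lia.
  by rewrite /r Zmod_mod.
have d1 : (2 ^ Z.of_nat v | r)%Z by apply/(dvd_v2 _ _ hr).
have d2 : ~ (2 ^ Z.of_nat v.+1 | r)%Z by move/(dvd_v2 _ _ hr); rewrite ltnn.
have dP : forall a, a <= 2 * L -> (2 ^ Z.of_nat a | PP L)%Z.
  move=> a ha. rewrite /PP. have := pow2_dvd _ _ ha. by rewrite -multE Nat2Z.inj_mul.
apply/eqP; rewrite eqn_leq; apply/andP; split.
- rewrite leqNgt; apply/negP => h.
  apply: d2. have : (2 ^ Z.of_nat v.+1 | z)%Z by apply/(dvd_v2 _ _ hz).
  have : (r = z - PP L * (z / PP L))%Z by lia.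
  move=> -> hd. apply: Z.divide_sub_r => //. apply: Z.divide_mul_l. exact: dP.
- apply/(dvd_v2 _ _ hz). rewrite ez. apply: Z.divide_add_r => //.
  apply: Z.divide_mul_l. apply: dP. exact: ltnW.
Qed.

Definition tau' (L : nat) (z : Z) : Z := if Z.eqb z 0 then tl L else tau z.

Lemma tauP L z : (tau' L z mod PP L = tau' L (z mod PP L) mod PP L)%Z.
Proof.
have hP := PP_pos L.
rewrite /tau'. case: (Z.eqb_spec z 0) => [->|hz]; first by rewrite Zmod_0_l.
case: (Z.eqb_spec (z mod PP L) 0) => hr.
- rewrite tau_tl. apply: tl_mod.
  have := v2_big _ _ hz hr. move=> h. rewrite leq_divRL //.
  by rewrite mulnC (leq_trans h) // leq_addr.
- by rewrite (tau_tl z) (tau_tl (z mod PP L)) -(v2_mod _ _ hr).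
Qed.

Lemma tau'_cong L a b : (a mod PP L = b mod PP L)%Z -> (tau' L a mod PP L = tau' L b mod PP L)%Z.
Proof. by move=> h; rewrite tauP h -tauP. Qed.

Definition red (L : nat) (x : Mc) : Mc :=
  match x with
  | MU k => MU (k mod PP L)
  | MB k i => MB (k mod PP L) (i mod PP L)
  | MC k j => MC (k mod PP L) (j mod PP L)
  | MD k => ME ((k + tl L) mod PP L)
  | ME k => ME (k mod PP L)
  | MZ => MZ
  end%Z.

Lemma red_bc L s i j : red L (bc s i j) = ME ((s + tau' L (j - i)) mod PP L)%Z.
Proof.
rewrite /bc /tau'. case: (Z.eqb_spec i j) => [<-|hij] /=.
- by rewrite Z.sub_diag.
- have -> : (j - i =? 0)%Z = false by apply/Z.eqb_neq; lia.
  by [].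
Qed.

Lemma modA3 L a b c : ((a mod PP L + b + c) mod PP L = (a + b + c) mod PP L)%Z.
Proof. by rewrite -!Z.add_assoc Zplus_mod_idemp_l. Qed.

Lemma mod_add_cong L a a' b b' : (a mod PP L = a' mod PP L)%Z -> (b mod PP L = b' mod PP L)%Z ->
  ((a + b) mod PP L = (a' + b') mod PP L)%Z.
Proof. by move=> h1 h2; rewrite Zplus_mod h1 h2 -Zplus_mod. Qed.

Lemma red_mul L x y : red L (mul x y) = red L (mul (red L x) y).
Proof.
have hP := PP_pos L.
case: x => [k|k i|k i|k|k|]; case: y => [l|l j|l j|l|l|]; cbn [mul red];
  rewrite ?red_bc; cbn [red]; try reflexivity;
  try (f_equal; rewrite ?Zplus_mod_idemp_l ?Zmod_mod ?modA3; try reflexivity; f_equal; ring).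
-
  f_equal. apply: mod_add_cong; first apply: mod_add_cong => //; first by rewrite Zmod_mod.
  apply: tau'_cong. by rewrite Zminus_mod_idemp_r.
-
  f_equal. apply: mod_add_cong; first apply: mod_add_cong => //; first by rewrite Zmod_mod.
  apply: tau'_cong. by rewrite Zminus_mod_idemp_l.
Qed.

Lemma red_mul2 L x y : red L (mul x y) = red L (mul (red L x) (red L y)).
Proof. by rewrite red_mul mul_comm red_mul mul_comm. Qed.

Definition nn (L : nat) : nat := Nat.pred (Z.to_nat (PP L)).
Definition O (L : nat) := 'I_(nn L).+1.

Definition toO L (z : Z) : O L := inord (Z.to_nat (z mod PP L)).
Definition fromO L (o : O L) : Z := Z.of_nat o.
Arguments fromO {L} o.

Lemma nnS L : (nn L).+1 = Z.to_nat (PP L).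
Proof. have := PP_pos L. rewrite /nn. lia. Qed.

Lemma fromO_toO L z : fromO (toO L z) = (z mod PP L)%Z.
Proof.
have hP := PP_pos L. have := Z.mod_pos_bound z (PP L) hP => hb.
rewrite /fromO /toO inordK; first by rewrite Z2Nat.id; lia.
rewrite nnS. apply/ltP. lia.
Qed.

Lemma toO_fromO L (o : O L) : toO L (fromO o) = o.
Proof.
have hP := PP_pos L. have ho := ltn_ord o. move/ltP: ho => ho. have e := nnS L.
rewrite /fromO /toO Z.mod_small; last lia.
rewrite Nat2Z.id. exact: inord_val.
Qed.

Lemma toO_mod L z : toO L (z mod PP L) = toO L z.
Proof. by rewrite /toO Zmod_mod. Qed.

Definition Nt (L : nat) : finType := option ((((O L) + (O L * O L)) + (O L * O L)) + O L)%type.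

Definition enc (L : nat) (x : Mc) : Nt L :=
  match x with
  | MU k => Some (inl (inl (inl (toO L k))))
  | MB k i => Some (inl (inl (inr (toO L k, toO L i))))
  | MC k j => Some (inl (inr (toO L k, toO L j)))
  | MD k => Some (inr (toO L (k + tl L)))
  | ME k => Some (inr (toO L k))
  | MZ => None
  end.

Definition dec (L : nat) (p : Nt L) : Mc :=
  match p with
  | None => MZ
  | Some (inl (inl (inl o))) => MU (fromO o)
  | Some (inl (inl (inr (o, o')))) => MB (fromO o) (fromO o')
  | Some (inl (inr (o, o'))) => MC (fromO o) (fromO o')
  | Some (inr o) => ME (fromO o)
  end.

Arguments dec {L} p.
Lemma dec_enc L x : dec (enc L x) = red L x.
Proof. by case: x => * /=; rewrite ?fromO_toO. Qed.
Lemma enc_dec L p : enc L (dec p) = p.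
Proof. by case: p => [[[[o|[o o']]|[o o']]|o]|] //=; rewrite ?toO_fromO. Qed.
Lemma enc_red L x : enc L (red L x) = enc L x.
Proof. by case: x => * /=; rewrite ?toO_mod. Qed.

Definition op L (p q : Nt L) : Nt L := enc L (mul (dec p) (dec q)).
Arguments op {L} p q.
Definition eN L : Nt L := enc L (MU 0).

Lemma enc_mul L x y : enc L (mul x y) = op (enc L x) (enc L y).
Proof. by rewrite /op !dec_enc -[RHS]enc_red -red_mul2 enc_red. Qed.

Lemma op_monoid L : is_monoid (@op L) (eN L).
Proof.
split.
- move=> p q r. rewrite -(enc_dec L p) -(enc_dec L q) -(enc_dec L r) -!enc_mul.
  by rewrite mul_assoc.
- move=> p. rewrite /op /eN dec_enc; cbn [red]; rewrite ?Zmod_0_l mul1. exact: enc_dec.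
- move=> p. rewrite /op /eN dec_enc; cbn [red]; rewrite ?Zmod_0_l mul_comm mul1. exact: enc_dec.
Qed.

Lemma mod_inj L a b : (Z.abs a + Z.abs b < PP L)%Z -> (a mod PP L = b mod PP L)%Z -> a = b.
Proof.
move=> hb h. have hP := PP_pos L.
have ea := Z_div_mod_eq_full a (PP L). have eb := Z_div_mod_eq_full b (PP L).
set qa := (a / PP L)%Z in ea. set qb := (b / PP L)%Z in eb.
have e : (a - b = PP L * (qa - qb))%Z by lia.
case: (Z.eq_dec qa qb) => hq; first lia.
have : (PP L <= Z.abs (PP L * (qa - qb)))%Z.
  rewrite Z.abs_mul Z.abs_eq; last lia.
  have : (1 <= Z.abs (qa - qb))%Z by lia. nia.
lia.
Qed.

Lemma DE_contra L k k' : (3 * Z.abs k + 3 * Z.abs k' + 3 < PP L)%Z ->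
  ((k + tl L) mod PP L <> k' mod PP L)%Z.
Proof.
move=> hb h. have hP := PP_pos L. have ht := tr_eq L. rewrite -tl_tr in ht.
have ea := Z_div_mod_eq_full (k + tl L) (PP L). have eb := Z_div_mod_eq_full k' (PP L).
rewrite h in ea.
set q1 := ((k + tl L) / PP L)%Z in ea. set q2 := (k' / PP L)%Z in eb.
have e : (3 * (k - k') - 2 = PP L * (3 * (q1 - q2) - 2))%Z by lia.
have hw : (3 * (q1 - q2) - 2 <> 0)%Z by lia.
have : (PP L <= Z.abs (PP L * (3 * (q1 - q2) - 2)))%Z.
  rewrite Z.abs_mul Z.abs_eq; last lia.
  have : (1 <= Z.abs (3 * (q1 - q2) - 2))%Z by lia. nia.
lia.
Qed.

Lemma DD L k k' : ((k + tl L) mod PP L = (k' + tl L) mod PP L)%Z -> (k mod PP L = k' mod PP L)%Z.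
Proof.
move=> h.
have : (((k + tl L) + - tl L) mod PP L = ((k' + tl L) + - tl L) mod PP L)%Z.
  by rewrite Zplus_mod h -Zplus_mod.
by rewrite -!Z.add_assoc Z.add_opp_diag_r !Z.add_0_r.
Qed.

Definition sz (x : Mc) : Z :=
  match x with
  | MU k | MD k | ME k => Z.abs k
  | MB k i | MC k i => Z.abs k + Z.abs i
  | MZ => 0
  end%Z.

Lemma sep x y : x <> y -> exists L, red L x <> red L y.
Proof.
move=> hxy.
have hs : forall z, (0 <= sz z)%Z by case=> * /=; lia.
set B := (3 * (sz x + sz y) + 3)%Z.
exists (Z.to_nat B).
have hB : (B < PP (Z.to_nat B))%Z.
  have := Z.pow_gt_lin_r 2 (2 * Z.of_nat (Z.to_nat B)). rewrite /PP.
  have := hs x; have := hs y. rewrite /B. lia.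
move: hB; rewrite /B; clear B; move: (Z.to_nat _) => L hB e; apply: hxy.
case: x e hB => [k|k i|k i|k|k|]; case: y => [l|l j|l j|l|l|]; cbn [red sz];
  move=> e hB; try discriminate.
- case: e => e. f_equal. apply: (mod_inj L) => //; lia.
- case: e => e1 e2. f_equal; apply: (mod_inj L) => //; lia.
- case: e => e1 e2. f_equal; apply: (mod_inj L) => //; lia.
- case: e => /DD e. f_equal; apply: (mod_inj L) => //; lia.
- case: e => e. exfalso; apply: (DE_contra L k l) => //; lia.
- case: e => e. exfalso; apply: (DE_contra L l k) => //; lia.
- case: e => e. f_equal. apply: (mod_inj L) => //; lia.
- by [].
Qed.

Lemma part1 : M_residually_finite.
Proof.
move=> s t hst.
have hne : nf s <> nf t by move=> e; apply: hst; exact: meq_nf.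
have [L hL] := sep _ _ hne.
exists (Nt L), (@op L), (eN L), (fun u => enc L (nf u)).
split.
- exact: op_monoid.
- split.
  + by move=> a b /nf_meq ->.
  + by [].
  + by move=> a b; rewrite nf_Tm enc_mul.
- move=> e; apply: hL. by rewrite -!dec_enc e.
Qed.

Theorem mainTheorem18 :
  [/\ M_residually_finite,
      (forall x : mterm, finitely_many_classes_in_J GreenR x /\
                         finitely_many_classes_in_J GreenL x) &
      ~ Raction_residually_finite].
Proof. split; [exact: part1 | exact: part2 | exact: part3]. Qed.
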